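(* Let $\varphi(z,x,y)$ and $\psi(z,x,y)$ both satisfy Conditions (C1)–(C5) described in the context. Then each of the following functions also satisfies Conditions (C1)–(C5): (i) $\theta(z,x,y)=\varphi(z,x,y)+\psi(z,x,y)$; (ii) $\theta(z,x,y)=\varphi(z,x,y)b(x,y)$, where $b\in L_\infty(\Omega\times\Omega)$ and $0<c_5<b(x,y)<c_6$ for constants $c_5,c_6$; (iii) $\theta(z,x,y)=\varphi(z,x,y)\psi(z,x,y)$; (iv) $\theta(z,x,y)=\varphi(\psi(z,x,y),x,y)$.
   Context: Let $\Omega\subseteq\mathbb R^d$ be a domain; functions in $L_{1,loc}(\Omega)$ are complex-valued. A real function $r$ on $[0,\infty)$ is almost increasing (resp. almost decreasing) with constant $\beta\ge1$ if $r(s)\le\beta r(t)$ (resp. $\beta r(s)\ge r(t)$) for all $0\le s\le t$. For a function $\theta:[0,\infty)\times\Omega\times\Omega\to[0,\infty)$, the conditions are: (C1) for each $u\in L_{1,loc}(\Omega)$ the function $(x,y)\mapsto\theta(|u(x)-u(y)|,x,y)$ is measurable on $\Omega\times\Omega$; (C2) for every $\varepsilon>0$ there is $\delta\in(0,1)$ such that $\theta(\frac{s+t}{2},x,y)\le(1-\delta)\frac{\theta(s,x,y)+\theta(t,x,y)}{2}$ for a.e. $(x,y)$ and all $s,t>0$ with $|s-t|\ge\varepsilon\max\{s,t\}$; (C3) there are constants $1<p_-\le p_+$ and $\beta\ge1$ such that for a.e. $(x,y)$ the function $t\mapsto\theta(t,x,y)/t^{p_-}$ is almost increasing with constant $\beta$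 and $t\mapsto\theta(t,x,y)/t^{p_+}$ is almost decreasing with constant $\beta$; (C4) for a.e. $(x,y)$: $c_1^{-1}\le\theta(1,x,y)\le c_1$ with some constant $c_1>0$, $\theta(0,x,y)=0$, and $\theta(t,x,y)>0$ for $t>0$; (C5) for a.e. $(x,y)$, $\theta(t,x,y)$ is differentiable in $t>0$ and $0<t\theta'(t,x,y)\le c_2\theta(t,x,y)$ for $t>0$, with some constant $c_2>1$ independent of $t,x,y$. The constants in the conditions may differ between functions. *)

(* Defs.v *)
From HB Require Import structures.
From mathcomp Require Import all_boot all_order all_algebra.
From mathcomp Require Import all_classical all_reals all_analysis.
From mathcomp Require Import complex.
Set Implicit Arguments. Unset Strict Implicit. Unset Printing Implicit Defensive.
Import Order.TTheory GRing.Theory Num.Theory.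
Import numFieldNormedType.Exports.
Local Open Scope classical_set_scope.
Local Open Scope ring_scope.

(* R^d is modelled as 'rV[R]_d (normed topology from matrix_normedtype).  *)
(* We equip it with the Borel sigma-algebra, i.e. the sigma-algebra       *)
(* generated by the coordinate maps (product of the Borel sets of R).     *)
Definition rV_display : measure_display -> measure_display.
Proof. exact. Qed.

Section rV_measurable.
Context (R : realType) (n : nat).

Definition rV_coord (i : 'I_n) : 'rV[R]_n -> R := fun x => x ord0 i.

Let rV_set0 : g_sigma_preimage rV_coord set0.
Proof. exact: sigma_algebra0. Qed.

Let rV_setC A : g_sigma_preimage rV_coord A -> g_sigma_preimage rV_coord (~` A).
Proof. exact: sigma_algebraC. Qed.

Let rV_bigcup (F : _^nat) : (forall i, g_sigma_preimage rV_coord (F i)) ->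
  g_sigma_preimage rV_coord (\bigcup_i (F i)).
Proof. exact: sigma_algebra_bigcup. Qed.

HB.instance Definition _ := @isMeasurable.Build (rV_display default_measure_display)
  'rV[R]_n (g_sigma_preimage rV_coord) rV_set0 rV_setC rV_bigcup.
End rV_measurable.

Section defs.
Context (R : realType) (d : nat).
Local Notation Rd := 'rV[R]_d.

Definition box (a b : Rd) : set Rd :=
  [set x | forall i : 'I_d, a ord0 i < x ord0 i <= b ord0 i].
Definition vol (a b : Rd) : R := \prod_(i < d) (b ord0 i - a ord0 i).
Definition box_le (a b : Rd) := forall i : 'I_d, a ord0 i <= b ord0 i.

Definition is_lebesgue (lam : {measure set Rd -> \bar R}) : Prop :=
  forall a b, box_le a b -> lam (box a b) = (vol a b)%:E.

Definition is_lebesgue2 (Lam : {measure set (Rd * Rd) -> \bar R}) : Prop :=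
  forall a b a' b', box_le a b -> box_le a' b' ->
    Lam (box a b `*` box a' b') = (vol a b * vol a' b')%:E.

Definition is_domain (Omega : set Rd) : Prop :=
  [/\ open Omega, connected Omega & Omega !=set0].

(* Lebesgue measurability (w.r.t. the completion of mu) of a real function
   on D: f coincides mu-a.e. on D with a Borel measurable function. *)
Definition ae_measurable {dT} {T : measurableType dT}
    (mu : {measure set T -> \bar R}) (D : set T) (f : T -> R) : Prop :=
  exists g : T -> R, measurable_fun D g /\ {ae mu, forall x, D x -> f x = g x}.

Definition L1loc (lam : {measure set Rd -> \bar R}) (Omega : set Rd)
    (u : Rd -> R[i]) : Prop :=
  exists g : Rd -> R[i],
    [/\ measurable_fun Omega (fun x => complex.Re (g x)),
        measurable_fun Omega (fun x => complex.Im (g x)),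
        {ae lam, forall x, Omega x -> u x = g x} &
        forall K : set Rd, compact K -> K `<=` Omega ->
          (\int[lam]_(x in K) (ComplexField.Normc.normc (g x))%:E < +oo)%E].

Definition almost_increasing_pos (beta : R) (r : R -> R) : Prop :=
  forall s t, 0 < s -> s <= t -> r s <= beta * r t.
Definition almost_decreasing_pos (beta : R) (r : R -> R) : Prop :=
  forall s t, 0 < s -> s <= t -> beta * r s >= r t.

Variables (lam : {measure set Rd -> \bar R})
          (Lam : {measure set (Rd * Rd) -> \bar R}) (Omega : set Rd).

Definition OO : set (Rd * Rd) := Omega `*` Omega.

Definition C0 (theta : R -> Rd -> Rd -> R) : Prop :=
  forall t x y, 0 <= t -> Omega x -> Omega y -> 0 <= theta t x y.

Definition C1 (theta : R -> Rd -> Rd -> R) : Prop :=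
  forall u : Rd -> R[i], L1loc lam Omega u ->
    ae_measurable Lam OO (fun p => theta (ComplexField.Normc.normc (u p.1 - u p.2)) p.1 p.2).

Definition C2 (theta : R -> Rd -> Rd -> R) : Prop :=
  forall eps : R, 0 < eps -> exists delta : R, 0 < delta < 1 /\
    {ae Lam, forall p, OO p -> forall s t : R, 0 < s -> 0 < t ->
       `|s - t| >= eps * Num.max s t ->
       theta ((s + t) / 2) p.1 p.2 <=
         (1 - delta) * ((theta s p.1 p.2 + theta t p.1 p.2) / 2)}.

Definition C3 (theta : R -> Rd -> Rd -> R) : Prop :=
  exists pm pp beta : R, [/\ 1 < pm, pm <= pp, 1 <= beta &
    {ae Lam, forall p, OO p ->
       almost_increasing_pos beta (fun t => theta t p.1 p.2 / t `^ pm) /\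
       almost_decreasing_pos beta (fun t => theta t p.1 p.2 / t `^ pp)}].

Definition C4 (theta : R -> Rd -> Rd -> R) : Prop :=
  exists c1 : R, 0 < c1 /\
    {ae Lam, forall p, OO p ->
       [/\ c1^-1 <= theta 1 p.1 p.2 <= c1, theta 0 p.1 p.2 = 0 &
           forall t, 0 < t -> 0 < theta t p.1 p.2]}.

Definition C5 (theta : R -> Rd -> Rd -> R) : Prop :=
  exists c2 : R, 1 < c2 /\
    {ae Lam, forall p, OO p -> forall t : R, 0 < t ->
       derivable (fun s => theta s p.1 p.2) t 1 /\
       0 < t * derive1 (fun s => theta s p.1 p.2) t <= c2 * theta t p.1 p.2}.

Definition conditions_C1_C5 (theta : R -> Rd -> Rd -> R) : Prop :=
  [/\ C0 theta, C1 theta, C2 theta, C3 theta & C4 theta /\ C5 theta].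

End defs.

(* Main.v *)
Require Import Defs.
From HB Require Import structures.
From mathcomp Require Import all_boot all_order all_algebra.
From mathcomp Require Import all_classical all_reals all_analysis.
From mathcomp Require Import complex.
From mathcomp Require Import ring lra.
From mathcomp Require Import measurable_realfun.
Set Implicit Arguments. Unset Strict Implicit. Unset Printing Implicit Defensive.
Import Order.TTheory GRing.Theory Num.Theory.
Import numFieldNormedType.Exports.
Local Open Scope classical_set_scope.
Local Open Scope ring_scope.


Section real_lemmas.
Context {R : realType}.
Implicit Types (f g : R -> R).

Definition goodf f := [/\ f 0 = 0, (forall t, 0 < t -> 0 < f t) &
  (forall t, 0 < t -> derivable f t 1 /\ 0 < t * derive1 f t)].

Lemma goodf_ge0 f : goodf f -> forall t, 0 <= t -> 0 <= f t.
Proof.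
case=> f0 fp _ t; rewrite le_eqVlt => /predU1P[<-|/fp/ltW//]; by rewrite f0.
Qed.

Lemma goodf_cont f : goodf f -> forall t, 0 < t -> {for t, continuous f}.
Proof.
case=> _ _ fd t t0; have [/derivable1_diffP + _] := fd t t0.
exact: differentiable_continuous.
Qed.

Lemma goodf_mono f : goodf f -> forall s t, 0 <= s -> s <= t -> f s <= f t.
Proof.
move=> gf s t; rewrite le_eqVlt => /predU1P[<- s0|s0 st].
  by case: (gf) => -> _ _; exact: goodf_ge0 gf t s0.
case: (gf) => _ _ fd.
have t0 : 0 < t by apply: lt_le_trans st.
apply: (@ger0_derive1_le_cc _ f s t) => //.
- by move=> x; rewrite in_itv /= => /andP[sx _]; apply: (fd x (lt_trans s0 sx)).1.
- move=> x; rewrite in_itv /= => /andP[sx _]; have x0 := lt_trans s0 sx.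
  have [_ h] := fd x x0; rewrite ltW //.
  by move: h; rewrite pmulr_rgt0.
- apply: continuous_in_subspaceT => x; rewrite inE /= in_itv /= => /andP[sx _].
  exact: goodf_cont gf x (lt_le_trans s0 sx).
- by rewrite in_itv /= lexx st.
- by rewrite in_itv /= lexx st.
Qed.


Definition mid_ok f (eps delta : R) := forall s t, 0 < s -> 0 < t ->
  eps * Num.max s t <= `|s - t| ->
  f ((s + t) / 2) <= (1 - delta) * ((f s + f t) / 2).

Lemma mid_sum f g e d1 d2 : (forall t, 0 < t -> 0 <= f t) ->
  (forall t, 0 < t -> 0 <= g t) -> mid_ok f e d1 -> mid_ok g e d2 ->
  mid_ok (fun t => f t + g t) e (Num.min d1 d2).
Proof.
move=> f0 g0 mf mg s t s0 t0 h.
have := mf s t s0 t0 h; have := mg s t s0 t0 h.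
have := f0 s s0; have := f0 t t0; have := g0 s s0; have := g0 t t0.
have h1 : Num.min d1 d2 <= d1 by rewrite ge_min lexx.
have h2 : Num.min d1 d2 <= d2 by rewrite ge_min lexx orbT.
set m := Num.min d1 d2 in h1 h2 *.
move=> *; nra.
Qed.

Lemma mid_scale f e d c : 0 < c -> mid_ok f e d -> mid_ok (fun t => f t * c) e d.
Proof.
move=> c0 mf s t s0 t0 h; have := mf s t s0 t0 h => H.
have -> : (1 - d) * ((f s * c + f t * c) / 2) = ((1 - d) * ((f s + f t) / 2)) * c.
  by field.
by rewrite ler_pM2r.
Qed.

Lemma mid_prod f g e d1 d2 : goodf f -> goodf g -> d1 < 1 -> d2 < 1 -> 0 < d2 ->
  mid_ok f e d1 -> mid_ok g e d2 -> mid_ok (fun t => f t * g t) e d1.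
Proof.
move=> gf gg d11 d21 d20 mf mg s t s0 t0 h.
have hm : 0 < (s + t) / 2 by rewrite divr_gt0 // addr_gt0.
have := mf s t s0 t0 h; have := mg s t s0 t0 h.
have := goodf_ge0 gf (ltW hm); have := goodf_ge0 gg (ltW hm).
have := goodf_ge0 gf (ltW s0); have := goodf_ge0 gf (ltW t0).
have := goodf_ge0 gg (ltW s0); have := goodf_ge0 gg (ltW t0).
have cheb : 0 <= (f s - f t) * (g s - g t).
  have [st|ts] := leP s t.
    have := goodf_mono gf (ltW s0) st; have := goodf_mono gg (ltW s0) st.
    by move=> *; nra.
  have := goodf_mono gf (ltW t0) (ltW ts); have := goodf_mono gg (ltW t0) (ltW ts).
  by move=> *; nra.
set fm := f ((s + t) / 2); set gm := g ((s + t) / 2).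
move=> a1 a2 a3 a4 a5 a6 h2 h1.
set Af := (f s + f t) / 2 in h1 *; set Ag := (g s + g t) / 2 in h2.
have Af0 : 0 <= Af by rewrite /Af; lra.
have Ag0 : 0 <= Ag by rewrite /Ag; lra.
have d1p : 0 <= 1 - d1 by lra.
have e1 : fm * gm <= ((1 - d1) * Af) * ((1 - d2) * Ag) by apply: ler_pM.
have e2 : Af * Ag <= (f s * g s + f t * g t) / 2 by rewrite /Af /Ag; nra.
apply: (le_trans e1).
apply: (@le_trans _ _ (((1 - d1) * Af) * Ag)).
  apply: ler_wpM2l; first by rewrite mulr_ge0.
  nra.
by rewrite -mulrA; apply: ler_wpM2l.
Qed.


Lemma mid_comp f g e dg da db : goodf f -> goodf g -> 0 < dg < 1 -> da < 1 ->
  mid_ok g e dg -> mid_ok f (dg / 2) da -> mid_ok f (dg / 4) db ->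
  mid_ok (fun t => f (g t)) e (Num.min da db).
Proof.
move=> gf gg /andP[dg0 dg1] da1 mg mfa mfb.
have mina : Num.min da db <= da by rewrite ge_min lexx.
have minb : Num.min da db <= db by rewrite ge_min lexx orbT.
move=> s t s0 t0 h.
wlog ab : s t s0 t0 h / g s <= g t.
  move=> W; have [//|ba] := leP (g s) (g t); first exact: W.
  rewrite (addrC s) (addrC (f (g s))); apply: W => //; last exact: ltW.
  by rewrite maxC distrC.
have hm : 0 < (s + t) / 2 by rewrite divr_gt0 // addr_gt0.
have [_ gp _] := gg; have [_ fp _] := gf.
have a0 := gp s s0; have b0 := gp t t0.
have fa0 := fp _ a0; have fb0 := fp _ b0.
have gm0 := goodf_ge0 gg (ltW hm).
have hg := mg s t s0 t0 h.
set a := g s in ab a0 fa0 hg *; set b := g t in ab b0 fb0 hg *.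
set gm := g ((s + t) / 2) in gm0 hg *.
have [case1|case2] := leP (dg / 4 * b) (b - a).
  have hM : gm <= (a + b) / 2 by nra.
  apply: (le_trans (goodf_mono gf gm0 hM)).
  have := mfb a b a0 b0; rewrite (max_r ab) distrC ger0_norm ?subr_ge0 //.
  move/(_ case1) => H; apply: (le_trans H); apply: ler_wpM2r; last by lra.
  by rewrite divr_ge0 // addr_ge0 // ltW.
have hM : gm <= (1 - dg / 4) * a by nra.
apply: (le_trans (goodf_mono gf gm0 hM)).
have a'0 : 0 < (1 - dg / 2) * a by rewrite mulr_gt0 //; lra.
have := mfa _ _ a'0 a0; rewrite (max_r _); last by nra.
have -> : ((1 - dg / 2) * a + a) / 2 = (1 - dg / 4) * a by field.
have -> : `|(1 - dg / 2) * a - a| = dg / 2 * a.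
  rewrite ler0_norm; first by field.
  by nra.
move/(_ (lexx _)) => H; apply: (le_trans H).
have fa'le : f ((1 - dg / 2) * a) <= f a by apply: (goodf_mono gf (ltW a'0)); nra.
have fab : f a <= f b by exact: (goodf_mono gf (ltW a0)) ab.
apply: (le_trans (y := (1 - da) * ((f a + f b) / 2))); last first.
  by apply: ler_wpM2r; [lra|lra].
by apply: ler_wpM2l; lra.
Qed.


Lemma div_cross (A B P Q b : R) : 0 < P -> 0 < Q ->
  (A / P <= b * (B / Q)) = (A * Q <= b * B * P).
Proof.
move=> P0 Q0; rewrite -(ler_pM2r (mulr_gt0 P0 Q0)).
have -> : A / P * (P * Q) = A * Q by field; rewrite gt_eqF.
have -> : b * (B / Q) * (P * Q) = b * B * P by field; rewrite gt_eqF.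
by [].
Qed.

Lemma div_cross' (A B P Q b : R) : 0 < P -> 0 < Q ->
  (b * (A / P) >= B / Q) = (B * P <= b * A * Q).
Proof.
move=> P0 Q0; rewrite -(ler_pM2r (mulr_gt0 P0 Q0)).
have -> : B / Q * (P * Q) = B * P by field; rewrite gt_eqF.
have -> : b * (A / P) * (P * Q) = b * A * Q by field; rewrite gt_eqF.
by [].
Qed.

Definition AIc (b p : R) f := forall s t, 0 < s -> s <= t ->
  f s * t `^ p <= b * f t * s `^ p.
Definition ADc (b p : R) f := forall s t, 0 < s -> s <= t ->
  f t * s `^ p <= b * f s * t `^ p.

Lemma AIcE b p f : almost_increasing_pos b (fun t => f t / t `^ p) <-> AIc b p f.
Proof.
split=> h s t s0 st; have t0 := lt_le_trans s0 st.
  by rewrite -div_cross ?powR_gt0 //; exact: h.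
by rewrite div_cross ?powR_gt0 //; exact: h.
Qed.

Lemma ADcE b p f : almost_decreasing_pos b (fun t => f t / t `^ p) <-> ADc b p f.
Proof.
split=> h s t s0 st; have t0 := lt_le_trans s0 st.
  by rewrite -div_cross' ?powR_gt0 //; exact: h.
by rewrite div_cross' ?powR_gt0 //; exact: h.
Qed.

Lemma AIc_beta b b' p f : b <= b' -> (forall t, 0 < t -> 0 <= f t) ->
  AIc b p f -> AIc b' p f.
Proof.
move=> bb f0 h s t s0 st; have t0 := lt_le_trans s0 st.
apply: (le_trans (h s t s0 st)); rewrite -!mulrA; apply: ler_wpM2r => //.
by rewrite mulr_ge0 ?powR_ge0 ?f0.
Qed.

Lemma ADc_beta b b' p f : b <= b' -> (forall t, 0 < t -> 0 <= f t) ->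
  ADc b p f -> ADc b' p f.
Proof.
move=> bb f0 h s t s0 st; have t0 := lt_le_trans s0 st.
apply: (le_trans (h s t s0 st)); rewrite -!mulrA; apply: ler_wpM2r => //.
by rewrite mulr_ge0 ?powR_ge0 ?f0.
Qed.

Lemma AIc_exp b p p' f : p' <= p -> 0 <= b -> (forall t, 0 < t -> 0 <= f t) ->
  AIc b p f -> AIc b p' f.
Proof.
move=> pp b0 f0 h s t s0 st; have t0 := lt_le_trans s0 st.
have tz : t != 0 := lt0r_neq0 t0; have sz : s != 0 := lt0r_neq0 s0.
have := h s t s0 st.
have [q -> qge0] : exists2 q, p = p' + q & 0 <= q.
  by exists (p - p'); [ring|rewrite subr_ge0].
rewrite !powRD ?tz ?sz ?implybT // => H.
have q0 : 0 < t `^ q by rewrite powR_gt0.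
rewrite -(ler_pM2r q0); apply: (le_trans (y := f s * (t `^ p' * t `^ q))).
  by rewrite mulrA.
apply: (le_trans H); rewrite -!mulrA; apply: ler_wpM2l => //.
apply: ler_wpM2l; first exact: f0.
apply: ler_wpM2l; first exact: powR_ge0.
by apply: ge0_ler_powR; rewrite // nnegrE ltW.
Qed.

Lemma ADc_exp b p p' f : p <= p' -> 0 <= b -> (forall t, 0 < t -> 0 <= f t) ->
  ADc b p f -> ADc b p' f.
Proof.
move=> pp b0 f0 h s t s0 st; have t0 := lt_le_trans s0 st.
have tz : t != 0 := lt0r_neq0 t0; have sz : s != 0 := lt0r_neq0 s0.
have := h s t s0 st.
have [q -> qge0] : exists2 q, p' = p + q & 0 <= q.
  by exists (p' - p); [ring|rewrite subr_ge0].
rewrite !powRD ?tz ?sz ?implybT // => H.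
apply: (le_trans (y := f t * (s `^ p * t `^ q))).
  apply: ler_wpM2l; first exact: f0.
  apply: ler_wpM2l; first exact: powR_ge0.
  by apply: ge0_ler_powR; rewrite // nnegrE ltW.
rewrite mulrA mulrA; apply: ler_wpM2r; first exact: powR_ge0.
exact: H.
Qed.


Lemma cross_sum (b1 b2 A1 A2 B1 B2 S T : R) : 0 <= b1 -> 0 <= b2 ->
  0 <= B1 -> 0 <= B2 -> 0 <= S ->
  A1 * T <= b1 * B1 * S -> A2 * T <= b2 * B2 * S ->
  (A1 + A2) * T <= (b1 + b2) * (B1 + B2) * S.
Proof.
move=> H H0 H1 H2 H3 h1 h2; have := mulr_ge0 (mulr_ge0 H H2) H3.
have := mulr_ge0 (mulr_ge0 H0 H1) H3.
nra.
Qed.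

Lemma AIc_sum b1 b2 p f g : 0 <= b1 -> 0 <= b2 ->
  (forall t, 0 < t -> 0 <= f t) -> (forall t, 0 < t -> 0 <= g t) ->
  AIc b1 p f -> AIc b2 p g -> AIc (b1 + b2) p (fun t => f t + g t).
Proof.
move=> b10 b20 f0 g0 hf hg s t s0 st; have t0 := lt_le_trans s0 st.
apply: cross_sum => //; [exact: f0|exact: g0|exact: powR_ge0|exact: hf|exact: hg].
Qed.

Lemma ADc_sum b1 b2 p f g : 0 <= b1 -> 0 <= b2 ->
  (forall t, 0 < t -> 0 <= f t) -> (forall t, 0 < t -> 0 <= g t) ->
  ADc b1 p f -> ADc b2 p g -> ADc (b1 + b2) p (fun t => f t + g t).
Proof.
move=> b10 b20 f0 g0 hf hg s t s0 st; have t0 := lt_le_trans s0 st.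
apply: cross_sum => //; [exact: f0|exact: g0|exact: powR_ge0|exact: hf|exact: hg].
Qed.

Lemma AIc_scale b p f c : 0 < c -> AIc b p f -> AIc b p (fun t => f t * c).
Proof.
move=> c0 hf s t s0 st; have := hf s t s0 st => H.
have -> : f s * c * t `^ p = (f s * t `^ p) * c by ring.
have -> : b * (f t * c) * s `^ p = (b * f t * s `^ p) * c by ring.
by rewrite ler_pM2r.
Qed.

Lemma ADc_scale b p f c : 0 < c -> ADc b p f -> ADc b p (fun t => f t * c).
Proof.
move=> c0 hf s t s0 st; have := hf s t s0 st => H.
have -> : f t * c * s `^ p = (f t * s `^ p) * c by ring.
have -> : b * (f s * c) * t `^ p = (b * f s * t `^ p) * c by ring.
by rewrite ler_pM2r.
Qed.

Lemma cross_prod (b1 b2 A1 A2 B1 B2 S1 S2 T1 T2 : R) :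
  0 <= A1 -> 0 <= A2 -> 0 <= T1 -> 0 <= T2 ->
  A1 * T1 <= b1 * B1 * S1 -> A2 * T2 <= b2 * B2 * S2 ->
  (A1 * A2) * (T1 * T2) <= (b1 * b2) * (B1 * B2) * (S1 * S2).
Proof.
move=> a1 a2 t1 t2 h1 h2.
have -> : A1 * A2 * (T1 * T2) = (A1 * T1) * (A2 * T2) by ring.
have -> : b1 * b2 * (B1 * B2) * (S1 * S2) = (b1 * B1 * S1) * (b2 * B2 * S2) by ring.
by apply: ler_pM => //; apply: mulr_ge0.
Qed.

Lemma AIc_prod b1 b2 p1 p2 f g :
  (forall t, 0 < t -> 0 <= f t) -> (forall t, 0 < t -> 0 <= g t) ->
  AIc b1 p1 f -> AIc b2 p2 g -> AIc (b1 * b2) (p1 + p2) (fun t => f t * g t).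
Proof.
move=> f0 g0 hf hg s t s0 st; have t0 := lt_le_trans s0 st.
rewrite !powRD ?lt0r_neq0 ?implybT //.
apply: cross_prod; [exact: f0|exact: g0|exact: powR_ge0|exact: powR_ge0|exact: hf|exact: hg].
Qed.

Lemma ADc_prod b1 b2 p1 p2 f g :
  (forall t, 0 < t -> 0 <= f t) -> (forall t, 0 < t -> 0 <= g t) ->
  ADc b1 p1 f -> ADc b2 p2 g -> ADc (b1 * b2) (p1 + p2) (fun t => f t * g t).
Proof.
move=> f0 g0 hf hg s t s0 st; have t0 := lt_le_trans s0 st.
rewrite !powRD ?lt0r_neq0 ?implybT //.
apply: cross_prod; [exact: f0|exact: g0|exact: powR_ge0|exact: powR_ge0|exact: hf|exact: hg].
Qed.

Lemma le_of_eq (x y : R) : x = y -> x <= y. Proof. by move->. Qed.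

Lemma cross_comp (fa fb a b x y b1 b2 p1 p2 : R) : 0 < a -> 0 < b -> 0 <= fa ->
  0 < x -> 0 < y -> 0 <= p1 ->
  fa * b `^ p1 <= b1 * fb * a `^ p1 -> a * y `^ p2 <= b2 * b * x `^ p2 ->
  fa * y `^ (p2 * p1) <= b1 * b2 `^ p1 * fb * x `^ (p2 * p1).
Proof.
move=> a0 b0 fa0 x0 y0 p10 h1 h2.
have h3 : (a * y `^ p2) `^ p1 <= (b2 * b * x `^ p2) `^ p1.
  apply: ge0_ler_powR => //; rewrite nnegrE.
    by rewrite mulr_ge0 ?powR_ge0 // ltW.
  by apply: (le_trans _ h2); rewrite mulr_ge0 ?powR_ge0 // ltW.
have b2ge0 : 0 <= b2.
  have : 0 < a * y `^ p2 by rewrite mulr_gt0 // powR_gt0.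
  move=> /lt_le_trans /(_ h2); rewrite pmulr_lgt0 ?powR_gt0 // pmulr_lgt0 //.
  exact: ltW.
rewrite !powRM ?powR_ge0 ?mulr_ge0 ?(ltW a0) ?(ltW b0) // in h3.
rewrite -!powRrM in h3.
have := cross_prod fa0 (powR_ge0 _ _) (powR_ge0 _ _) (powR_ge0 _ _) h1 h3.
set A := a `^ p1; set B := b `^ p1.
have A0 : 0 < A by rewrite powR_gt0.
have B0 : 0 < B by rewrite powR_gt0.
move=> H.
rewrite -(ler_pM2r (mulr_gt0 A0 B0)).
apply: le_trans (le_of_eq _) (le_trans H (le_of_eq _)); ring.
Qed.


Lemma AIc_comp b1 b2 p1 p2 f g : goodf g -> 0 <= p1 ->
  (forall t, 0 < t -> 0 <= f t) ->
  AIc b1 p1 f -> AIc b2 p2 g -> AIc (b1 * b2 `^ p1) (p2 * p1) (fun t => f (g t)).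
Proof.
move=> gg p10 f0 hf hg s t s0 st; have t0 := lt_le_trans s0 st.
have [_ gp _] := gg.
apply: (cross_comp (gp _ s0) (gp _ t0) (f0 _ (gp _ s0)) s0 t0 p10 _ (hg s t s0 st)).
exact: (hf _ _ (gp _ s0) (goodf_mono gg (ltW s0) st)).
Qed.

Lemma ADc_comp b1 b2 p1 p2 f g : goodf g -> 0 <= p1 ->
  (forall t, 0 < t -> 0 <= f t) ->
  ADc b1 p1 f -> ADc b2 p2 g -> ADc (b1 * b2 `^ p1) (p2 * p1) (fun t => f (g t)).
Proof.
move=> gg p10 f0 hf hg s t s0 st; have t0 := lt_le_trans s0 st.
have [_ gp _] := gg.
apply: (cross_comp (gp _ t0) (gp _ s0) (f0 _ (gp _ t0)) t0 s0 p10 _ (hg s t s0 st)).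
exact: (hf _ _ (gp _ s0) (goodf_mono gg (ltW s0) st)).
Qed.


Definition good5 (c : R) f := forall t, 0 < t ->
  derivable f t 1 /\ 0 < t * derive1 f t <= c * f t.

Lemma good5_sum c1 c2 f g : 0 <= c1 -> 0 <= c2 ->
  (forall t, 0 < t -> 0 <= f t) -> (forall t, 0 < t -> 0 <= g t) ->
  good5 c1 f -> good5 c2 g -> good5 (c1 + c2) (fun t => f t + g t).
Proof.
move=> c10 c20 f0 g0 hf hg t t0.
have [df /andP[f1 f2]] := hf t t0; have [dg /andP[g1 g2]] := hg t t0.
have dfg : derivable (fun t => f t + g t) t 1 by exact: derivableD.
split => //.
have -> : derive1 (fun t => f t + g t) t = derive1 f t + derive1 g t.
  by rewrite !derive1E; exact: deriveD.
have := f0 t t0; have := g0 t t0 => a b.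
apply/andP; split; first by nra.
nra.
Qed.

Lemma good5_scale c f b : 0 < b -> good5 c f -> good5 c (fun t => f t * b).
Proof.
move=> b0 hf t t0; have [df /andP[f1 f2]] := hf t t0.
have dfb : derivable (fun t => f t * b) t 1.
  by apply: derivableM => //; exact: derivable_cst.
split => //; rewrite derive1Mr //.
apply/andP; split; first by rewrite mulrA mulr_gt0.
by rewrite mulrA mulrA ler_pM2r.
Qed.

Lemma good5_prod c1 c2 f g :
  (forall t, 0 < t -> 0 < f t) -> (forall t, 0 < t -> 0 < g t) ->
  good5 c1 f -> good5 c2 g -> good5 (c1 + c2) (fun t => f t * g t).
Proof.
move=> f0 g0 hf hg t t0.
have [df /andP[f1 f2]] := hf t t0; have [dg /andP[g1 g2]] := hg t t0.
have dfg : derivable (fun t => f t * g t) t 1 by exact: derivableM.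
split => //.
have -> : derive1 (fun t => f t * g t) t = f t * derive1 g t + g t * derive1 f t.
  by rewrite !derive1E; exact: deriveM.
have := f0 t t0; have := g0 t t0 => a b.
apply/andP; split; first by nra.
nra.
Qed.

Lemma good5_comp c1 c2 f g : (forall t, 0 < t -> 0 < g t) ->
  good5 c1 f -> good5 c2 g -> good5 (c1 * c2) (fun t => f (g t)).
Proof.
move=> g0 hf hg t t0.
have [dg /andP[g1 g2]] := hg t t0.
have gt0 := g0 t t0.
have [df /andP[f1 f2]] := hf _ gt0.
have dfg : derivable (fun t => f (g t)) t 1.
  apply/derivable1_diffP; apply: differentiable_comp; exact/derivable1_diffP.
split => //.
have -> : derive1 (fun t => f (g t)) t = derive1 f (g t) * derive1 g t.
  exact: (derive1_comp dg df).
have -> : t * (derive1 f (g t) * derive1 g t) =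
  (g t * derive1 f (g t)) * (t * derive1 g t) / g t by field; rewrite gt_eqF.
apply/andP; split; first by rewrite divr_gt0 // mulr_gt0.
rewrite ler_pdivrMr //.
have c10 : 0 <= c1 * f (g t) by apply: ltW; apply: lt_le_trans f2.
have := ler_pM (ltW f1) (ltW g1) f2 g2.
move=> H; apply: (le_trans H); apply/le_of_eq; ring.
Qed.


Lemma one_powR (p : R) : 1 `^ p = 1. Proof. by rewrite powR1. Qed.

Lemma f_up f b pm pp a : 0 <= pm -> 0 <= b -> 0 <= f 1 ->
  AIc b pm f -> ADc b pp f -> 0 < a -> f a <= b * f 1 * (1 + a `^ pp).
Proof.
move=> pm0 b0 f10 hi hd a0.
have bf0 : 0 <= b * f 1 by rewrite mulr_ge0.
have app := powR_ge0 a pp.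
have [a1|a1] := leP a 1.
  have := hi a 1 a0 a1; rewrite one_powR mulr1 => H; apply: (le_trans H).
  have : a `^ pm <= 1.
    by rewrite -(one_powR pm); apply: ge0_ler_powR; rewrite // nnegrE ltW.
  move=> h; nra.
have := hd 1 a ltr01 (ltW a1); rewrite one_powR mulr1 => H; apply: (le_trans H).
nra.
Qed.

Lemma f_low f b pm pp a : 0 <= pm -> 0 <= pp -> 0 <= b -> 0 <= f 1 ->
  AIc b pm f -> ADc b pp f -> 0 < a -> f 1 * (Num.min 1 a) `^ pp <= b * f a.
Proof.
move=> pm0 pp0 b0 f10 hi hd a0.
have [a1|a1] := leP a 1.
  by have := hd a 1 a0 a1; rewrite one_powR mulr1.
rewrite one_powR mulr1.
have := hi 1 a ltr01 (ltW a1); rewrite one_powR mulr1 => H; apply: le_trans H.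
have : 1 <= a `^ pm.
  by rewrite -(one_powR pm); apply: ge0_ler_powR => //; rewrite ?nnegrE ?ler01 ?(ltW a1) ?(ltW a0).
move=> h; nra.
Qed.

End real_lemmas.


Section rV_meas.
Variables (R : realType) (d : nat).

Lemma coord_measurable (i : 'I_d) (B : set R) : measurable B ->
  measurable [set x : 'rV[R]_d | B (x ord0 i)].
Proof.
move=> mB; apply: sub_sigma_algebra.
rewrite (bigD1 i) //=; left; exists B => //.
by rewrite setTI.
Qed.

Lemma rV_prod_measurable (P : 'I_d -> set R) : (forall i, measurable (P i)) ->
  measurable [set x : 'rV[R]_d | forall i, P i (x ord0 i)].
Proof.
move=> mP.
have -> : [set x : 'rV[R]_d | forall i, P i (x ord0 i)] =
  \bigcap_(i in [set: 'I_d]) [set x : 'rV[R]_d | P i (x ord0 i)].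
  by apply/seteqP; split => x /= h i; [move=> _; exact: h|exact: h].
apply: fin_bigcap_measurable; first exact: finite_finset.
by move=> i _; exact: coord_measurable.
Qed.

Lemma box_measurable (a b : 'rV[R]_d) : measurable (box a b).
Proof.
apply: (@rV_prod_measurable (fun i => `]a ord0 i, b ord0 i]%classic)) => i.
exact: measurable_itv.
Qed.

End rV_meas.

Section int_lemmas.
Local Open Scope ereal_scope.
Import HBNNSimple.

Lemma le_int_setT d (T : measurableType d) (R : realType)
  (mu : {measure set T -> \bar R}) (D : set T) (f g : T -> \bar R) :
  (forall x, D x -> 0 <= f x) -> (forall x, 0 <= g x) ->
  (forall x, D x -> f x <= g x) ->
  \int[mu]_(x in D) f x <= \int[mu]_x g x.
Proof.
move=> f0 g0 fg; rewrite ge0_integralE // ge0_integralTE //.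
apply: ge_ereal_sup => _ [h /= hf <-]; apply: le_ereal_sup_tmp.
exists (sintegral mu h) => //; exists h => // x; apply: le_trans (hf x) _.
rewrite /patch; case: ifP => [|_]; last exact: g0.
by rewrite inE; exact: fg.
Qed.

End int_lemmas.

Section L1loc_ind.
Variables (R : realType) (d : nat).
Local Notation Rd := 'rV[R]_d.

Definition rc (a : R) : R[i] := (a +i* 0)%C.

Lemma normc_rc (a : R) : ComplexField.Normc.normc (rc a) = `|a|.
Proof. by rewrite /ComplexField.Normc.normc /= expr0n /= addr0 sqrtr_sqr. Qed.

Lemma rcB (a b : R) : rc a - rc b = rc (a - b).
Proof. by rewrite /rc; congr Complex => /=; rewrite subrr. Qed.

Definition uind (q : R) (A : set Rd) : Rd -> R[i] := fun x => rc (q * \1_A x).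

Lemma L1loc_ind (lam : {measure set Rd -> \bar R}) (Omega : set Rd) q (A : set Rd) :
  measurable A -> (lam A < +oo)%E -> 0 <= q -> L1loc lam Omega (uind q A).
Proof.
move=> mA lA q0; exists (uind q A); split.
- apply: measurable_funM; first exact: measurable_cst.
  by apply: measurable_indic.
- exact: measurable_cst.
- exact: aeW.
move=> K _ _.
apply: (@le_lt_trans _ _ (\int[lam]_x (q * \1_A x)%:E)%E).
  apply: le_int_setT.
  - by move=> x _; rewrite lee_fin /uind normc_rc.
  - by move=> x; rewrite lee_fin mulr_ge0 // indic_ge0.
  - by move=> x _; rewrite /uind normc_rc ger0_norm // mulr_ge0 // indic_ge0.
rewrite (@integralZl_indic _ _ _ _ _ measurableT (fun=> A)) /=; first last.
- exact: mA.
- by move=> q0'; have := lt_le_trans q0' q0; rewrite ltxx.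
rewrite integral_indic ?setIT //.
have key : forall x : \bar R, (0 <= x)%E -> (x < +oo)%E -> (q%:E * x < +oo)%E.
  by case=> [r||] //= _ _; rewrite -EFinM ltry.
by apply: key; [exact: measure_ge0|exact: lA].
Qed.

Lemma normc_uind q A x y : 0 <= q ->
  ComplexField.Normc.normc (uind q A x - uind q A y) = q * `|\1_A x - \1_A y|.
Proof.
by move=> q0; rewrite /uind rcB normc_rc -mulrBr normrM ger0_norm.
Qed.

Lemma indic_diff01 (A : set Rd) x y :
  `|\1_A x - \1_A y| = 0 :> R \/ `|\1_A x - \1_A y| = 1 :> R.
Proof.
rewrite !indicE; case: (x \in A); case: (y \in A); rewrite /= ?subrr ?normr0;
  by [left|right; rewrite ?subr0 ?sub0r ?normrN normr1].
Qed.


End L1loc_ind.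

Lemma maxr_r (R : realType) (a b : R) : a <= b -> Num.max a b = b.
Proof. by move=> h; apply/max_idPr. Qed.
Lemma maxr_l (R : realType) (a b : R) : b <= a -> Num.max a b = a.
Proof. by move=> h; apply/max_idPl. Qed.

Section aem.
Context dT (T : measurableType dT) (R : realType).
Variables (mu : {measure set T -> \bar R}) (D : set T).

Lemma aem_eq (f g : T -> R) : ae_measurable mu D f ->
  {ae mu, forall p, D p -> f p = g p} -> ae_measurable mu D g.
Proof.
move=> [F [mF eF]] e; exists F; split => //.
by apply: filterS2 eF e => p h1 h2 Dp; rewrite -h2 // h1.
Qed.

Lemma aem_meas (f : T -> R) : measurable_fun D f -> ae_measurable mu D f.
Proof. by move=> mf; exists f; split => //; exact: aeW. Qed.

Lemma aem_max (f g : T -> R) : ae_measurable mu D f ->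
  ae_measurable mu D g -> ae_measurable mu D (fun p => Num.max (f p) (g p)).
Proof.
move=> [F [mF eF]] [G [mG eG]]; exists (F \max G); split.
  exact: measurable_maxr.
by apply: filterS2 eF eG => p h1 h2 Dp; rewrite /= h1 ?h2.
Qed.

Fixpoint mxs (h : nat -> T -> R) n p : R :=
  if n is n'.+1 then Num.max (mxs h n' p) (h n' p) else 0.

Lemma aem_mxs (h : nat -> T -> R) n : (forall k, ae_measurable mu D (h k)) ->
  ae_measurable mu D (mxs h n).
Proof.
move=> hm; elim: n => [|n IH] /=.
  by apply: aem_meas; exact: measurable_cst.
exact: aem_max.
Qed.

Lemma mxs_bnd (h : nat -> T -> R) n p c : 0 <= c ->
  (forall k, h k p = 0 \/ h k p = c) -> 0 <= mxs h n p <= c.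
Proof.
move=> c0 hh; elim: n => [|n /andP[IH1 IH2]] /=; first by rewrite lexx c0.
have hn : 0 <= h n p <= c by case: (hh n) => ->; rewrite ?lexx ?c0.
case/andP: hn => hn1 hn2.
by rewrite le_max IH1 /= ge_max IH2 hn2.
Qed.

Lemma mxs_zero (h : nat -> T -> R) n p : (forall k, h k p = 0) -> mxs h n p = 0.
Proof. by move=> hh; elim: n => [|n IH] //=; rewrite IH hh maxxx. Qed.

Lemma mxs_const (h : nat -> T -> R) n p c k0 : 0 <= c ->
  (forall k, h k p = 0 \/ h k p = c) -> (k0 < n)%N -> h k0 p = c -> mxs h n p = c.
Proof.
move=> c0 hh; elim: n => [//|n IH] kn hk /=.
have /andP[b1 b2] := mxs_bnd n c0 hh.
have hn : 0 <= h n p <= c by case: (hh n) => ->; rewrite ?lexx ?c0.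
case/andP: hn => hn1 hn2.
move: kn; rewrite ltnS leq_eqVlt => /orP[/eqP e|kn].
  by rewrite e in hk; rewrite hk; apply: maxr_r.
by rewrite IH //; apply: maxr_l.
Qed.

Lemma aem_cvg (f_ : nat -> T -> R) (f : T -> R) :
  (forall n, ae_measurable mu D (f_ n)) ->
  {ae mu, forall p, D p -> f_ ^~ p @ \oo --> f p} -> ae_measurable mu D f.
Proof.
move=> hm hc.
have /choice[F hF] : forall n, exists F, measurable_fun D F /\
    {ae mu, forall p, D p -> f_ n p = F p} by move=> n; exact: hm.
have hall : {ae mu, forall p, forall n, D p -> f_ n p = F n p}.
  by apply: ae_foralln => n; exact: (hF n).2.
have [N [mN N0 sN]] := filterI hall hc.
pose G n p := F n p * \1_(~` N) p.
exists (fun p => f p * \1_(~` N) p); split.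
  move=> mD; apply: (@measurable_fun_cvg _ _ _ D G) => //.
    move=> n; apply: measurable_funM; first exact: (hF n).1.
    by apply: measurable_indic; exact: measurableC.
  move=> p Dp; rewrite /G; have [pN|pN] := pselect ((~` N) p).
    have e : \1_(~` N) p = 1 :> R by rewrite indicE mem_set.
    rewrite e mulr1; under eq_fun do rewrite mulr1.
    have [h1 h2] : (forall n, D p -> f_ n p = F n p) /\
      (D p -> f_ ^~ p @ \oo --> f p).
      by apply: contrapT => H; apply: pN; apply: sN.
    have := h2 Dp; apply: cvg_trans; apply: near_eq_cvg; near=> n.
    by rewrite h1.
  have e : \1_(~` N) p = 0 :> R by rewrite indicE memNset.
  rewrite e mulr0; under eq_fun do rewrite mulr0.
  exact: cvg_cst.
exists N; split => // p /= H; apply: contrapT => pN; apply: H => Dp.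
have e : \1_(~` N) p = 1 :> R by rewrite indicE mem_set.
by rewrite e mulr1.
Unshelve. all: end_near.
Qed.

Lemma aem_sel (Hs : nat -> T -> R) (J : T -> nat) :
  (forall j, ae_measurable mu D (Hs j)) ->
  (forall j, measurable D -> measurable (D `&` [set p | J p = j])) ->
  ae_measurable mu D (fun p => Hs (J p) p).
Proof.
move=> hm hJ.
have /choice[F hF] : forall n, exists F, measurable_fun D F /\
    {ae mu, forall p, D p -> Hs n p = F p} by move=> n; exact: hm.
have hall : {ae mu, forall p, forall n, D p -> Hs n p = F n p}.
  by apply: ae_foralln => n; exact: (hF n).2.
exists (fun p => F (J p) p); split; last first.
  by apply: filterS hall => p h Dp; exact: h.
move=> mD Y mY.
have -> : D `&` (fun p => F (J p) p) @^-1` Y =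
    \bigcup_j ((D `&` [set p | J p = j]) `&` (D `&` F j @^-1` Y)).
  apply/seteqP; split => p /=.
    by move=> [Dp Yp]; exists (J p) => //.
  by move=> [j _ [[Dp <-] [_ Yp]]].
apply: bigcupT_measurable => j; apply: measurableI; first exact: hJ.
exact: (hF j).1.
Qed.

End aem.
Section boxes.
Variables (R : realType) (d : nat).
Local Notation Rd := 'rV[R]_d.

Definition bxa (N : nat) : Rd := \row_j (- N%:R).
Definition bxb (i : 'I_d) (r : rat) (N : nat) : Rd :=
  \row_j (if j == i then Num.max (ratr r) (- N%:R) else N%:R).
Definition bx (k : nat) : set Rd :=
  match (unpickle k : option ('I_d * rat * nat)) with
  | Some (i, r, N) => box (bxa N) (bxb i r N)
  | None => set0
  end.

Lemma le_maxP (a b c : R) : c <= Num.max a b -> c <= a \/ c <= b.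
Proof. by rewrite le_max => /orP. Qed.

Lemma bx_meas k : measurable (bx k).
Proof. by rewrite /bx; case: unpickle => [[[i r] N]|] //; exact: box_measurable. Qed.

Lemma bx_fin (lam : {measure set Rd -> \bar R}) k : is_lebesgue lam -> (lam (bx k) < +oo)%E.
Proof.
move=> leb; rewrite /bx; case: unpickle => [[[i r] N]|]; last by rewrite measure0.
rewrite leb ?ltry // => j; rewrite !mxE; case: ifP => _.
  by rewrite le_max lexx orbT.
by rewrite -subr_ge0 opprK addr_ge0.
Qed.

Lemma bx_sep (x y : Rd) : x != y ->
  exists k, (bx k x /\ ~ bx k y) \/ (~ bx k x /\ bx k y).
Proof.
move=> xy.
have [i xiy] : exists i, x ord0 i != y ord0 i.
  apply/existsP; rewrite -negb_forall; apply: contra xy => /forallP h.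
  by apply/eqP/rowP => j; apply/eqP; exact: h.
pose S := \sum_j (`|x ord0 j| + `|y ord0 j|).
pose N := (Num.truncn S).+1.
have SN : S < N%:R by rewrite truncnS_gt.
have bnd z j : (z = x \/ z = y) -> `|z ord0 j| < N%:R.
  move=> hz; apply: le_lt_trans SN; rewrite /S (bigD1 j) //=.
  have h0 : 0 <= \sum_(k | k != j) (`|x ord0 k| + `|y ord0 k|).
    by apply: sumr_ge0 => k _; rewrite addr_ge0.
  have := normr_ge0 (x ord0 j); have := normr_ge0 (y ord0 j).
  by case: hz => -> *; lra.
have key (u v : Rd) : (u = x \/ u = y) -> (v = x \/ v = y) ->
    u ord0 i < v ord0 i -> exists k, bx k u /\ ~ bx k v.
  move=> hu hv uv.
  have [r] := rat_in_itvoo uv; rewrite in_itv /= => /andP[ur rv].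
  exists (pickle (i, r, N)); rewrite /bx pickleK; split.
    move=> j; rewrite !mxE; have := bnd u j hu; rewrite ltr_norml => /andP[h1 h2].
    apply/andP; split => //; case: ifP => [/eqP ->|_]; last exact: ltW.
    by rewrite le_max (ltW ur).
  move=> /(_ i); rewrite !mxE eqxx => /andP[_].
  have := bnd v i hv; rewrite ltr_norml => /andP[h1 h2].
  by move/le_maxP => [h|h]; lra.
have [xy'|yx'] := ltP (x ord0 i) (y ord0 i).
  by have [k hk] := key x y (or_introl erefl) (or_intror erefl) xy'; exists k; left.
have yx : y ord0 i < x ord0 i by rewrite lt_neqAle yx' eq_sym xiy.
by have [k hk] := key y x (or_intror erefl) (or_introl erefl) yx; exists k; right; case: hk.
Qed.

End boxes.

Section C1comp.
Variables (R : realType) (d : nat) (Omega : set 'rV[R]_d)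
  (lam : {measure set 'rV[R]_d -> \bar R})
  (Lam : {measure set ('rV[R]_d * 'rV[R]_d) -> \bar R})
  (phi psi : R -> 'rV[R]_d -> 'rV[R]_d -> R).
Hypotheses (leb : is_lebesgue lam) (h0phi : C0 Omega phi) (h0psi : C0 Omega psi)
  (h4phi : C4 Lam Omega phi) (h4psi : C4 Lam Omega psi)
  (h5phi : C5 Lam Omega phi)
  (h1phi : C1 lam Lam Omega phi) (h1psi : C1 lam Lam Omega psi).
Local Notation T2 := ('rV[R]_d * 'rV[R]_d)%type.
Local Notation D := (OO Omega).

Definition ek k (p : T2) : R := `|\1_(bx k) p.1 - \1_(bx k) p.2|.

Lemma phi0_ae : {ae Lam, forall p, D p -> phi 0 p.1 p.2 = 0}.
Proof. by case: h4phi => c [_ H]; apply: filterS H => p h Dp; case: (h Dp). Qed.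

Lemma hk_aem q k : 0 <= q -> ae_measurable Lam D (fun p => phi q p.1 p.2 * ek k p).
Proof.
move=> q0.
have := h1phi (L1loc_ind Omega (bx_meas k) (bx_fin k leb) q0).
move=> H; apply: (aem_eq H); apply: filterS phi0_ae => p h Dp.
rewrite normc_uind // /ek.
by case: (indic_diff01 (bx k) p.1 p.2) => ->; rewrite ?mulr0 ?h // ?mulr1.
Qed.

Definition Hq q (p : T2) : R := phi q p.1 p.2 * (p.1 != p.2)%:R.

Lemma Hq_aem q : 0 <= q -> ae_measurable Lam D (Hq q).
Proof.
move=> q0.
apply: (@aem_cvg _ _ _ _ _ (fun n => mxs (fun k p => phi q p.1 p.2 * ek k p) n)).
  by move=> n; apply: aem_mxs => k; exact: hk_aem.
apply: aeW => p [x1 x2].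
have c0 : 0 <= phi q p.1 p.2 by apply: h0phi.
have hh : forall k, phi q p.1 p.2 * ek k p = 0 \/ phi q p.1 p.2 * ek k p = phi q p.1 p.2.
  by move=> k; rewrite /ek; case: (indic_diff01 (bx k) p.1 p.2) => ->;
    [left; rewrite mulr0|right; rewrite mulr1].
rewrite /Hq; case: (eqVneq p.1 p.2) => e /=.
  rewrite mulr0; apply: cvg_near_cst; near=> n; apply: mxs_zero => k.
  by rewrite /ek e subrr normr0 mulr0.
rewrite mulr1.
have [k0 hk0] := bx_sep e.
have ek1 : ek k0 p = 1.
  rewrite /ek !indicE; case: hk0 => -[h1 h2].
    by rewrite mem_set // memNset // subr0 normr1.
  by rewrite memNset // mem_set // sub0r normrN normr1.
apply: cvg_near_cst; near=> n; apply: (@mxs_const _ _ _ _ n p _ k0) => //.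
  by near: n; exact: nbhs_infty_gt.
by rewrite ek1 mulr1.
Unshelve. all: end_near.
Qed.


Lemma truncn_set_meas (j : nat) : measurable [set x : R | Num.truncn x = j].
Proof.
case: j => [|j].
  have -> : [set x : R | Num.truncn x = 0%N] = `]-oo, 1[%classic.
    apply/seteqP; split => x /=; rewrite in_itv /=.
      by move=> h; rewrite -[1]/(0%N.+1%:R) -truncn_le_nat h.
    by move=> h; apply/eqP; rewrite -leqn0 truncn_le_nat.
  exact: measurable_itv.
have -> : [set x : R | Num.truncn x = j.+1] = `[j.+1%:R, j.+2%:R[%classic.
  apply/seteqP; split => x /=; rewrite in_itv /=.
    move=> h; apply/andP; split.
      by rewrite -truncn_gt_nat h.
    by rewrite -truncn_le_nat h.
  move=> /andP[h1 h2]; apply/eqP; rewrite eqn_leq truncn_le_nat h2 /=.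
  by rewrite truncn_gt_nat.
exact: measurable_itv.
Qed.

Lemma normc_ge0 (z : R[i]) : 0 <= ComplexField.Normc.normc z.
Proof. by case: z => a b; rewrite /ComplexField.Normc.normc sqrtr_ge0. Qed.

Lemma good_phi_ae : {ae Lam, forall p, D p -> goodf (fun s => phi s p.1 p.2)}.
Proof.
case: h4phi => [c1 [c10 H4]]; case: h5phi => [c2 [c21 H5]].
apply: filterS2 H4 H5 => p K4 K5 Dp.
have [_ z pos] := K4 Dp; split => // t t0.
by have [dv /andP[a _]] := K5 Dp t t0.
Qed.

Lemma psi0_ae : {ae Lam, forall p, D p -> psi 0 p.1 p.2 = 0}.
Proof. by case: h4psi => c [_ H]; apply: filterS H => p h Dp; case: (h Dp). Qed.

Lemma C1_comp_main : C1 lam Lam Omega (fun z x y => phi (psi z x y) x y).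
Proof.
move=> u hu.
have [G [mG eG]] := h1psi hu.
pose J n p := Num.truncn (n.+1%:R * G p).
pose Fn n p := Hq ((J n p)%:R / n.+1%:R) p.
apply: (@aem_cvg _ _ _ _ _ Fn).
  move=> n; apply: (@aem_sel _ _ _ _ _ (fun j => Hq (j%:R / n.+1%:R)) (J n)).
    by move=> j; apply: Hq_aem; rewrite divr_ge0.
  move=> j mD.
  have mf : measurable_fun D (fun p => n.+1%:R * G p).
    by apply: measurable_funM => //; exact: measurable_cst.
  exact: (mf mD _ (truncn_set_meas j)).
apply: filterS2 (filterI eG good_phi_ae) (filterI psi0_ae phi0_ae).
move=> p [eGp gp] [ps0 ph0] Dp.
have gp' := gp Dp; have eg := eGp Dp; rewrite /= in eg.
rewrite /Fn /Hq /=.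
case: (eqVneq p.1 p.2) => e.
  under eq_fun do rewrite /= mulr0n mulr0.
  have v0 : ComplexField.Normc.normc (u p.1 - u p.2) = 0.
    by rewrite e subrr /ComplexField.Normc.normc /= expr0n /= addr0 sqrtr0.
  rewrite v0 ps0 // ph0 //; exact: cvg_cst.
under eq_fun do rewrite /= mulr1n mulr1.
rewrite eg.
have G0 : 0 <= G p.
  by rewrite -eg; apply: h0psi; [exact: normc_ge0|exact: Dp.1|exact: Dp.2].
move: G0; rewrite le_eqVlt => /predU1P[G0|Gpos].
  rewrite -G0; under eq_fun do rewrite /J -G0 mulr0 truncn0 mul0r.
  exact: cvg_cst.
suff H : (fun n => (J n p)%:R / n.+1%:R) @ \oo --> G p.
  exact: (continuous_cvg _ (goodf_cont gp' Gpos) H).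
apply/cvgrPdist_le => eps eps0.
near=> n.
have hy := truncn_itv (mulr_ge0 (ler0n _ n.+1) (ltW Gpos)).
rewrite /J; set y := n.+1%:R * G p in hy *; set t := (Num.truncn y)%:R in hy *.
case/andP: hy => hy1 hy2.
have npos : 0 < n.+1%:R :> R by [].
have E : G p - t / n.+1%:R = (y - t) / n.+1%:R by rewrite /y; field.
rewrite E ger0_norm; last by rewrite divr_ge0 // subr_ge0.
have hn : n.+1%:R^-1 < eps.
  by near: n; exact: (near_infty_natSinv_lt (PosNum eps0)).
apply: ltW; apply: le_lt_trans hn.
rewrite -[X in _ <= X]mul1r; apply: ler_wpM2r; first by rewrite invr_ge0.
rewrite lerBlDr addrC /t natr1; exact: ltW.
Unshelve. all: end_near.
Qed.

End C1comp.


Section main.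
Variables (R : realType) (d : nat) (Omega : set 'rV[R]_d)
  (lam : {measure set 'rV[R]_d -> \bar R})
  (Lam : {measure set ('rV[R]_d * 'rV[R]_d) -> \bar R}).
Local Notation T2 := ('rV[R]_d * 'rV[R]_d)%type.
Local Notation Fn := (R -> 'rV[R]_d -> 'rV[R]_d -> R).
Implicit Types (th phi psi : Fn).

Definition sec th (p : T2) := fun s => th s p.1 p.2.

Lemma cond_good th : C4 Lam Omega th -> C5 Lam Omega th ->
  {ae Lam, forall p, OO Omega p -> goodf (sec th p)}.
Proof.
move=> [c1 [c10 h4]] [c2 [c21 h5]]; apply: filterS2 h4 h5 => p H4 H5 Op.
have [_ z pos] := H4 Op; split => // t t0.
by have [dv /andP[a _]] := H5 Op t t0.
Qed.

Lemma C0_nonneg th : C0 Omega th -> forall p, OO Omega p ->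
  forall t, 0 < t -> 0 <= sec th p t.
Proof. move=> h q []; move=> x1 x2 t t0; apply: h => //; exact: ltW. Qed.

Lemma C0_sum phi psi : C0 Omega phi -> C0 Omega psi ->
  C0 Omega (fun z x y => phi z x y + psi z x y).
Proof. by move=> h1 h2 t x y t0 ox oy; rewrite addr_ge0 ?h1 ?h2. Qed.

Lemma C0_scale phi (b : 'rV[R]_d -> 'rV[R]_d -> R) :
  (forall x y, Omega x -> Omega y -> 0 < b x y) -> C0 Omega phi ->
  C0 Omega (fun z x y => phi z x y * b x y).
Proof. by move=> hb h1 t x y t0 ox oy; rewrite mulr_ge0 ?h1 // ltW ?hb. Qed.

Lemma C0_prod phi psi : C0 Omega phi -> C0 Omega psi ->
  C0 Omega (fun z x y => phi z x y * psi z x y).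
Proof. by move=> h1 h2 t x y t0 ox oy; rewrite mulr_ge0 ?h1 ?h2. Qed.

Lemma C0_comp phi psi : C0 Omega phi -> C0 Omega psi ->
  C0 Omega (fun z x y => phi (psi z x y) x y).
Proof. by move=> h1 h2 t x y t0 ox oy; rewrite h1 ?h2. Qed.

Lemma C5_sum phi psi : C0 Omega phi -> C0 Omega psi ->
  C5 Lam Omega phi -> C5 Lam Omega psi ->
  C5 Lam Omega (fun z x y => phi z x y + psi z x y).
Proof.
move=> h01 h02 [c1 [c11 h1]] [c2 [c21 h2]]; exists (c1 + c2); split.
  by lra.
apply: filterS2 h1 h2 => p H1 H2 Op.
apply: (@good5_sum _ c1 c2 (sec phi p) (sec psi p)); try lra.
- exact: C0_nonneg.
- exact: C0_nonneg.
- exact: H1.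
- exact: H2.
Qed.

Lemma C5_scale phi (b : 'rV[R]_d -> 'rV[R]_d -> R) :
  (forall x y, Omega x -> Omega y -> 0 < b x y) ->
  C5 Lam Omega phi -> C5 Lam Omega (fun z x y => phi z x y * b x y).
Proof.
move=> hb [c1 [c11 h1]]; exists c1; split => //.
apply: filterS h1 => p H1 [x1 x2].
exact: (@good5_scale _ c1 (sec phi p) (b p.1 p.2) (hb _ _ x1 x2) (H1 (conj x1 x2))).
Qed.

Lemma C5_prod phi psi : C4 Lam Omega phi -> C4 Lam Omega psi ->
  C5 Lam Omega phi -> C5 Lam Omega psi ->
  C5 Lam Omega (fun z x y => phi z x y * psi z x y).
Proof.
move=> g1 g2 h1 h2; have G1 := cond_good g1 h1; have G2 := cond_good g2 h2.
case: h1 => [c1 [c11 h1]]; case: h2 => [c2 [c21 h2]].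
exists (c1 + c2); split; first by lra.
apply: filterS2 (filterI G1 G2) (filterI h1 h2) => p [K1 K2] [H1 H2] Op.
have [_ p1 _] := K1 Op; have [_ p2 _] := K2 Op.
exact: (@good5_prod _ c1 c2 (sec phi p) (sec psi p) p1 p2 (H1 Op) (H2 Op)).
Qed.

Lemma C5_comp phi psi : C4 Lam Omega psi ->
  C5 Lam Omega phi -> C5 Lam Omega psi ->
  C5 Lam Omega (fun z x y => phi (psi z x y) x y).
Proof.
move=> g2 h1 h2; have G2 := cond_good g2 h2.
case: h1 => [c1 [c11 h1]]; case: h2 => [c2 [c21 h2]].
exists (c1 * c2); split; first by nra.
apply: filterS2 G2 (filterI h1 h2) => p K2 [H1 H2] Op.
have [_ p2 _] := K2 Op.
exact: (@good5_comp _ c1 c2 (sec phi p) (sec psi p) p2 (H1 Op) (H2 Op)).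
Qed.


Lemma C2_sum phi psi : C0 Omega phi -> C0 Omega psi ->
  C2 Lam Omega phi -> C2 Lam Omega psi ->
  C2 Lam Omega (fun z x y => phi z x y + psi z x y).
Proof.
move=> h01 h02 h1 h2 eps eps0.
have [d1 [/andP[d10 d11] H1]] := h1 eps eps0.
have [d2 [/andP[d20 d21] H2]] := h2 eps eps0.
exists (Num.min d1 d2); split.
  by apply/andP; split; [rewrite lt_min d10 d20|rewrite gt_min d11].
apply: filterS2 H1 H2 => p K1 K2 Op.
exact: (@mid_sum _ (sec phi p) (sec psi p) eps d1 d2 (C0_nonneg h01 Op)
  (C0_nonneg h02 Op) (K1 Op) (K2 Op)).
Qed.

Lemma C2_scale phi (b : 'rV[R]_d -> 'rV[R]_d -> R) :
  (forall x y, Omega x -> Omega y -> 0 < b x y) ->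
  C2 Lam Omega phi -> C2 Lam Omega (fun z x y => phi z x y * b x y).
Proof.
move=> hb h1 eps eps0.
have [d1 [dd H1]] := h1 eps eps0; exists d1; split => //.
apply: filterS H1 => p K1 [x1 x2].
exact: (@mid_scale _ (sec phi p) eps d1 (b p.1 p.2) (hb _ _ x1 x2) (K1 (conj x1 x2))).
Qed.

Lemma C2_prod phi psi : C4 Lam Omega phi -> C4 Lam Omega psi ->
  C5 Lam Omega phi -> C5 Lam Omega psi ->
  C2 Lam Omega phi -> C2 Lam Omega psi ->
  C2 Lam Omega (fun z x y => phi z x y * psi z x y).
Proof.
move=> g1 g2 g51 g52 h1 h2 eps eps0.
have G1 := cond_good g1 g51; have G2 := cond_good g2 g52.
have [d1 [/andP[d10 d11] H1]] := h1 eps eps0.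
have [d2 [/andP[d20 d21] H2]] := h2 eps eps0.
exists d1; split; first by apply/andP.
apply: filterS2 (filterI G1 G2) (filterI H1 H2) => p [K1 K2] [L1 L2] Op.
exact: (@mid_prod _ (sec phi p) (sec psi p) eps d1 d2 (K1 Op) (K2 Op) d11 d21 d20
  (L1 Op) (L2 Op)).
Qed.

Lemma C2_comp phi psi : C4 Lam Omega phi -> C4 Lam Omega psi ->
  C5 Lam Omega phi -> C5 Lam Omega psi ->
  C2 Lam Omega phi -> C2 Lam Omega psi ->
  C2 Lam Omega (fun z x y => phi (psi z x y) x y).
Proof.
move=> g1 g2 g51 g52 h1 h2 eps eps0.
have G1 := cond_good g1 g51; have G2 := cond_good g2 g52.
have [dg [/andP[dg0 dg1] Hg]] := h2 eps eps0.
have [da [/andP[da0 da1] Ha]] := h1 (dg / 2) (divr_gt0 dg0 (ltr0Sn _ _)).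
have [db [/andP[db0 db1] Hb]] := h1 (dg / 4) (divr_gt0 dg0 (ltr0Sn _ _)).
exists (Num.min da db); split.
  by apply/andP; split; [rewrite lt_min da0 db0|rewrite gt_min da1].
apply: filterS2 (filterI G1 G2) (filterI Hg (filterI Ha Hb)) => p [K1 K2] [L [La Lb]] Op.
have dgi : 0 < dg < 1 by apply/andP.
exact: (@mid_comp _ (sec phi p) (sec psi p) eps dg da db (K1 Op) (K2 Op) dgi da1
  (L Op) (La Op) (Lb Op)).
Qed.


Lemma C3_get th : C3 Lam Omega th -> exists pm pp b, [/\ 1 < pm, pm <= pp, 1 <= b &
  {ae Lam, forall p, OO Omega p -> AIc b pm (sec th p) /\ ADc b pp (sec th p)}].
Proof.
move=> [pm [pp [b [h1 h2 h3 H]]]]; exists pm, pp, b; split => //.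
apply: filterS H => p K Op; have [A D] := K Op.
by split; [apply/AIcE|apply/ADcE].
Qed.

Lemma C3_put th pm pp b : 1 < pm -> pm <= pp -> 1 <= b ->
  {ae Lam, forall p, OO Omega p -> AIc b pm (sec th p) /\ ADc b pp (sec th p)} ->
  C3 Lam Omega th.
Proof.
move=> h1 h2 h3 H; exists pm, pp, b; split => //.
apply: filterS H => p K Op; have [A D] := K Op.
by split; [apply/AIcE|apply/ADcE].
Qed.

Lemma C3_sum phi psi : C0 Omega phi -> C0 Omega psi ->
  C3 Lam Omega phi -> C3 Lam Omega psi ->
  C3 Lam Omega (fun z x y => phi z x y + psi z x y).
Proof.
move=> h01 h02 /C3_get[pm1 [pp1 [b1 [p1 q1 c1 H1]]]] /C3_get[pm2 [pp2 [b2 [p2 q2 c2 H2]]]].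
apply: (@C3_put _ (Num.min pm1 pm2) (Num.max pp1 pp2) (b1 + b2)).
- by rewrite lt_min p1 p2.
- by rewrite ge_min le_max q1.
- by lra.
apply: filterS2 H1 H2 => p K1 K2 Op.
have [A1 D1] := K1 Op; have [A2 D2] := K2 Op.
have n1 := C0_nonneg h01 Op; have n2 := C0_nonneg h02 Op.
have b10 : 0 <= b1 by lra.
have b20 : 0 <= b2 by lra.
split.
  apply: (@AIc_sum _ b1 b2 _ (sec phi p) (sec psi p)) => //.
    by apply: (AIc_exp _ b10 n1 A1); rewrite ge_min lexx.
  by apply: (AIc_exp _ b20 n2 A2); rewrite ge_min lexx orbT.
apply: (@ADc_sum _ b1 b2 _ (sec phi p) (sec psi p)) => //.
  by apply: (ADc_exp _ b10 n1 D1); rewrite le_max lexx.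
by apply: (ADc_exp _ b20 n2 D2); rewrite le_max lexx orbT.
Qed.

Lemma C3_scale phi (b : 'rV[R]_d -> 'rV[R]_d -> R) :
  (forall x y, Omega x -> Omega y -> 0 < b x y) ->
  C3 Lam Omega phi -> C3 Lam Omega (fun z x y => phi z x y * b x y).
Proof.
move=> hb /C3_get[pm1 [pp1 [b1 [p1 q1 c1 H1]]]].
apply: (@C3_put _ pm1 pp1 b1) => //.
apply: filterS H1 => p K1 [x1 x2]; have [A1 D1] := K1 (conj x1 x2).
split; [exact: (AIc_scale (hb _ _ x1 x2) A1)|exact: (ADc_scale (hb _ _ x1 x2) D1)].
Qed.

Lemma C3_prod phi psi : C0 Omega phi -> C0 Omega psi ->
  C3 Lam Omega phi -> C3 Lam Omega psi ->
  C3 Lam Omega (fun z x y => phi z x y * psi z x y).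
Proof.
move=> h01 h02 /C3_get[pm1 [pp1 [b1 [p1 q1 c1 H1]]]] /C3_get[pm2 [pp2 [b2 [p2 q2 c2 H2]]]].
apply: (@C3_put _ (pm1 + pm2) (pp1 + pp2) (b1 * b2)).
- by lra.
- by lra.
- by nra.
apply: filterS2 H1 H2 => p K1 K2 Op.
have [A1 D1] := K1 Op; have [A2 D2] := K2 Op.
have n1 := C0_nonneg h01 Op; have n2 := C0_nonneg h02 Op.
split; [exact: AIc_prod|exact: ADc_prod].
Qed.

Lemma C3_comp phi psi : C0 Omega phi -> C4 Lam Omega psi -> C5 Lam Omega psi ->
  C3 Lam Omega phi -> C3 Lam Omega psi ->
  C3 Lam Omega (fun z x y => phi (psi z x y) x y).
Proof.
move=> h01 g2 g52 /C3_get[pm1 [pp1 [b1 [p1 q1 c1 H1]]]] /C3_get[pm2 [pp2 [b2 [p2 q2 c2 H2]]]].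
have G2 := cond_good g2 g52.
have b2pm : b2 `^ pm1 <= b2 `^ pp1 by apply: ler_powR.
have b2ge1 : 1 <= b2 `^ pm1.
  by rewrite -(powRr0 b2); apply: ler_powR => //; lra.
apply: (@C3_put _ (pm2 * pm1) (pp2 * pp1) (b1 * b2 `^ pp1)).
- by nra.
- by apply: ler_pM; lra.
- by nra.
apply: filterS2 G2 (filterI H1 H2) => p K2 [K1 K3] Op.
have [A1 D1] := K1 Op; have [A2 D2] := K3 Op.
have n1 := C0_nonneg h01 Op.
split.
  apply: (@AIc_beta _ (b1 * b2 `^ pm1)); first by apply: ler_wpM2l => //; lra.
    by move=> t t0; apply: n1; have [_ gp _] := K2 Op; exact: gp.
  apply: (@AIc_comp _ b1 b2 pm1 pm2 (sec phi p) (sec psi p)) => //.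
    exact: K2.
  by lra.
apply: (@ADc_comp _ b1 b2 pp1 pp2 (sec phi p) (sec psi p)) => //.
  exact: K2.
by lra.
Qed.


Lemma C4_sum phi psi : C4 Lam Omega phi -> C4 Lam Omega psi ->
  C4 Lam Omega (fun z x y => phi z x y + psi z x y).
Proof.
move=> [c1 [c10 H1]] [c2 [c20 H2]]; exists (c1 + c2); split; first by lra.
apply: filterS2 H1 H2 => p K1 K2 Op.
have [/andP[l1 u1] z1 q1] := K1 Op; have [/andP[l2 u2] z2 q2] := K2 Op.
split.
- apply/andP; split; last by lra.
  have : (c1 + c2)^-1 <= c1^-1 by rewrite lef_pV2 ?posrE //; lra.
  have : 0 <= c2^-1 by rewrite invr_ge0 ltW.
  move=> *; lra.
- by rewrite z1 z2 addr0.
- by move=> t t0; rewrite addr_gt0 ?q1 ?q2.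
Qed.

Lemma C4_scale phi (b : 'rV[R]_d -> 'rV[R]_d -> R) (c5 c6 : R) : 0 < c5 ->
  (forall x y, Omega x -> Omega y -> c5 < b x y < c6) ->
  C4 Lam Omega phi -> C4 Lam Omega (fun z x y => phi z x y * b x y).
Proof.
move=> c50 hb [c1 [c10 H1]].
have q0 : 0 < c1 / c5 by rewrite divr_gt0.
exists (c1 * `|c6| + c1 / c5); split.
  by rewrite ltr_pwDr // mulr_ge0 // ltW.
apply: filterS H1 => p K1 [x1 x2].
have [/andP[l1 u1] z1 q1] := K1 (conj x1 x2).
have /andP[bl bu] := hb _ _ x1 x2.
have b0 : 0 < b p.1 p.2 by apply: lt_trans bl.
have c1i : 0 < c1^-1 by rewrite invr_gt0.
split.
- apply/andP; split.
    apply: (@le_trans _ _ (c1^-1 * c5)).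
      rewrite -[c1^-1 * c5]invrK invfM invrK mulrC lef_pV2 ?posrE ?invr_gt0 ?mulr_gt0 //.
        by rewrite ler_wpDl // mulr_ge0 // ltW.
      by rewrite ltr_pwDr // mulr_ge0 // ltW.
      by rewrite invr_gt0.
    by apply: ler_pM => //; apply: ltW.
  apply: (@le_trans _ _ (c1 * `|c6|)); last by rewrite lerDl ltW.
  apply: ler_pM => //; first by apply: (le_trans (ltW c1i)).
    exact: ltW.
  by apply: (le_trans (ltW bu)); exact: ler_norm.
- by rewrite z1 mul0r.
- by move=> t t0; rewrite mulr_gt0 ?q1.
Qed.

Lemma C4_prod phi psi : C4 Lam Omega phi -> C4 Lam Omega psi ->
  C4 Lam Omega (fun z x y => phi z x y * psi z x y).
Proof.
move=> [c1 [c10 H1]] [c2 [c20 H2]]; exists (c1 * c2); split; first by rewrite mulr_gt0.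
apply: filterS2 H1 H2 => p K1 K2 Op.
have [/andP[l1 u1] z1 q1] := K1 Op; have [/andP[l2 u2] z2 q2] := K2 Op.
have c1i : 0 < c1^-1 by rewrite invr_gt0.
have c2i : 0 < c2^-1 by rewrite invr_gt0.
split.
- apply/andP; split.
    by rewrite invfM; apply: ler_pM => //; apply: ltW.
  by apply: ler_pM => //; [exact: (le_trans (ltW c1i))|exact: (le_trans (ltW c2i))].
- by rewrite z1 mul0r.
- by move=> t t0; rewrite mulr_gt0 ?q1 ?q2.
Qed.


Lemma C4_comp phi psi : C3 Lam Omega phi ->
  C4 Lam Omega phi -> C4 Lam Omega psi ->
  C4 Lam Omega (fun z x y => phi (psi z x y) x y).
Proof.
move=> /C3_get[pm1 [pp1 [b1 [p1 q1 be1 H3]]]] [c1 [c10 H1]] [c2 [c20 H2]].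
have pp10 : 0 <= pp1 by lra.
have C0 : 0 < b1 * c1 * (1 + c2 `^ pp1).
  by rewrite !mulr_gt0 //; [lra| rewrite ltr_pwDl ?powR_ge0].
exists (b1 * c1 * (1 + c2 `^ pp1)); split => //.
apply: filterS2 H3 (filterI H1 H2) => p K3 [K1 K2] Op.
have [A D] := K3 Op.
have [/andP[l1 u1] z1 q1'] := K1 Op; have [/andP[l2 u2] z2 q2] := K2 Op.
have c1i : 0 < c1^-1 by rewrite invr_gt0.
have c2i : 0 < c2^-1 by rewrite invr_gt0.
set a := psi 1 p.1 p.2 in l2 u2 *.
set f1 := phi 1 p.1 p.2 in l1 u1.
have a0 : 0 < a by apply: lt_le_trans l2.
have f10 : 0 < f1 by apply: lt_le_trans l1.
have c1f : 1 <= c1 * f1.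
  by rewrite -(mulfV (lt0r_neq0 c10)); apply: ler_wpM2l => //; exact: ltW.
have c21 : 1 <= c2.
  have h : c2^-1 <= c2 by apply: le_trans u2.
  have := ler_wpM2l (ltW c20) h; rewrite mulfV ?lt0r_neq0 // => h'; nra.
have up := f_up (ltW (lt_trans ltr01 p1)) (ltW (lt_le_trans ltr01 be1)) (ltW f10) A D a0.
have lo := f_low (ltW (lt_trans ltr01 p1)) pp10 (ltW (lt_le_trans ltr01 be1)) (ltW f10) A D a0.
rewrite -/f1 in up lo.
have cm : 1 <= c2 * Num.min 1 a.
  have [a1|a1] := leP a 1.
    by rewrite -(mulfV (lt0r_neq0 c20)); apply: ler_wpM2l; [exact: ltW|].
  by rewrite mulr1.
set m := (Num.min 1 a) `^ pp1 in lo.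
have m0 : 0 <= m by exact: powR_ge0.
have M1 : 1 <= c2 `^ pp1 * m.
  have e : c2 `^ pp1 * m = (c2 * Num.min 1 a) `^ pp1.
    have mn0 : 0 <= Num.min 1 a by have [a1|a1] := leP a 1; lra.
    by rewrite /m powRM //; exact: ltW.
  rewrite e; apply: le_trans (le_of_eq (esym (one_powR pp1))) _.
  by apply: ge0_ler_powR => //; rewrite ?nnegrE ?ler01 //; lra.
have apow : a `^ pp1 <= c2 `^ pp1 by apply: ge0_ler_powR; rewrite // nnegrE ltW.
have pa0 := powR_ge0 a pp1.
split.
- apply/andP; split; last first.
    apply: (le_trans up); rewrite -mulrA -mulrA; apply: ler_pM.
    + lra.
    + by rewrite mulr_ge0 //; [exact: ltW|lra].
    + lra.
    + apply: ler_pM; [exact: ltW|lra|exact: u1|lra].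
  rewrite -[_^-1]mulr1 ler_pdivrMl //.
  set C := b1 * c1 * (1 + c2 `^ pp1).
  have h1 : b1 <= C * (f1 * m).
    rewrite /C; have := powR_ge0 c2 pp1 => h.
    have : b1 * 1 <= b1 * ((c1 * f1) * (c2 `^ pp1 * m)).
      apply: ler_wpM2l; first lra.
      by rewrite -[1]mulr1; apply: ler_pM.
    rewrite mulr1 => h'; apply: (le_trans h').
    have : 0 <= b1 * (c1 * f1) * m by rewrite !mulr_ge0 //; lra.
    move=> h''; rewrite -subr_ge0.
    have -> : b1 * c1 * (1 + c2 `^ pp1) * (f1 * m) - b1 * (c1 * f1 * (c2 `^ pp1 * m))
      = b1 * (c1 * f1) * m by ring.
    exact: h''.
  have h2 : C * (f1 * m) <= C * (b1 * phi a p.1 p.2) by apply: ler_wpM2l; [exact: ltW|].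
  have b10 : 0 < b1 by lra.
  have : b1 * 1 <= b1 * (C * phi a p.1 p.2).
    rewrite mulr1; apply: (le_trans h1); apply: (le_trans h2); apply/le_of_eq; ring.
  by rewrite ler_pM2l.
- by rewrite z2.
- by move=> t t0; apply: q1'; apply: q2.
Qed.


Lemma aem_D (D : set T2) (f g : T2 -> R) : ae_measurable Lam D f ->
  ae_measurable Lam D g -> ae_measurable Lam D (fun p => f p + g p).
Proof.
move=> [F [mF eF]] [G [mG eG]]; exists (F \+ G); split.
  exact: measurable_funD.
by apply: filterS2 eF eG => p h1 h2 Dp; rewrite /= h1 ?h2.
Qed.

Lemma aem_M (D : set T2) (f g : T2 -> R) : ae_measurable Lam D f ->
  ae_measurable Lam D g -> ae_measurable Lam D (fun p => f p * g p).
Proof.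
move=> [F [mF eF]] [G [mG eG]]; exists (F \* G); split.
  exact: measurable_funM.
by apply: filterS2 eF eG => p h1 h2 Dp; rewrite /= h1 ?h2.
Qed.

Lemma C1_sum phi psi : C1 lam Lam Omega phi -> C1 lam Lam Omega psi ->
  C1 lam Lam Omega (fun z x y => phi z x y + psi z x y).
Proof. by move=> h1 h2 u hu; apply: aem_D; [exact: h1|exact: h2]. Qed.

Lemma C1_prod phi psi : C1 lam Lam Omega phi -> C1 lam Lam Omega psi ->
  C1 lam Lam Omega (fun z x y => phi z x y * psi z x y).
Proof. by move=> h1 h2 u hu; apply: aem_M; [exact: h1|exact: h2]. Qed.

Lemma C1_scale phi (b : 'rV[R]_d -> 'rV[R]_d -> R) :
  ae_measurable Lam (Omega `*` Omega) (fun p => b p.1 p.2) ->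
  C1 lam Lam Omega phi -> C1 lam Lam Omega (fun z x y => phi z x y * b x y).
Proof. by move=> hb h1 u hu; apply: aem_M; [exact: h1|exact: hb]. Qed.

Lemma C1_comp phi psi : is_lebesgue lam ->
  C0 Omega phi -> C0 Omega psi -> C4 Lam Omega phi -> C4 Lam Omega psi ->
  C5 Lam Omega phi -> C5 Lam Omega psi ->
  C1 lam Lam Omega phi -> C1 lam Lam Omega psi ->
  C1 lam Lam Omega (fun z x y => phi (psi z x y) x y).
Proof.
move=> leb h0 h0' h4 h4' h5 h5' h1 h1'.
exact: (C1_comp_main leb h0 h0' h4 h4' h5 h1 h1').
Qed.

End main.

Theorem theorem2p9 (R : realType) (d : nat) (Omega : set 'rV[R]_d)
  (lam : {measure set 'rV[R]_d -> \bar R})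
  (Lam : {measure set ('rV[R]_d * 'rV[R]_d) -> \bar R})
  (phi psi : R -> 'rV[R]_d -> 'rV[R]_d -> R) :
  is_domain Omega -> is_lebesgue lam -> is_lebesgue2 Lam ->
  conditions_C1_C5 lam Lam Omega phi ->
  conditions_C1_C5 lam Lam Omega psi ->
  [/\ (* (i) *)
      conditions_C1_C5 lam Lam Omega (fun z x y => phi z x y + psi z x y),
      (* (ii) *)
      (forall (b : 'rV[R]_d -> 'rV[R]_d -> R) (c5 c6 : R),
         ae_measurable Lam (Omega `*` Omega) (fun p => b p.1 p.2) ->
         0 < c5 ->
         (forall x y, Omega x -> Omega y -> c5 < b x y < c6) ->
         conditions_C1_C5 lam Lam Omega (fun z x y => phi z x y * b x y)),
      (* (iii) *)
      conditions_C1_C5 lam Lam Omega (fun z x y => phi z x y * psi z x y) &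
      (* (iv) *)
      conditions_C1_C5 lam Lam Omega (fun z x y => phi (psi z x y) x y)].
Proof.
move=> dom leb leb2 [a0 a1 a2 a3 [a4 a5]] [b0 b1 b2 b3 [b4 b5]].
split.
- split; [exact: C0_sum|exact: C1_sum|exact: C2_sum|exact: C3_sum|split].
  + exact: C4_sum.
  + exact: C5_sum.
- move=> b c5 c6 mb c50 hb.
  have hb' : forall x y, Omega x -> Omega y -> 0 < b x y.
    by move=> x y ox oy; have /andP[h _] := hb x y ox oy; exact: lt_trans h.
  split; [exact: C0_scale|exact: C1_scale|exact: C2_scale|exact: C3_scale|split].
  + exact: (C4_scale c50 hb).
  + exact: C5_scale.
- split; [exact: C0_prod|exact: C1_prod|exact: C2_prod|exact: C3_prod|split].
  + exact: C4_prod.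
  + exact: C5_prod.
- split; [exact: C0_comp|exact: C1_comp|exact: C2_comp|exact: C3_comp|split].
  + exact: C4_comp.
  + exact: C5_comp.
Qed.
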